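(* Let $\epsilon>0$, $T\in\mathbb{N}$, $B\ge T$, and define $k=2\lfloor B/T\rfloor$. Then there exists an instance of the UVP problem (with total budget $B$, maximum per-configuration budget $T$, smoothness parameter $\epsilon$) with $k$ clusters, each of radius $r_k>0$, such that no algorithm can achieve an approximation factor exceeding $(1-\epsilon r_k)$, where $r_k$ is the optimal clustering radius for $k$ clusters.
   Context: UVP problem: $A:\mathbb{R}^d\times[T]\to[0,1]$ is an unknown function ($[T]=\{1,\dots,T\}$); a finite set $\mathcal{X}\subset\mathbb{R}^d$ is known. The goal is $\max_{b_1,\dots,b_n}\max_{i}A(\mathbf{x}_i,b_i)$ subject to $\sum_i b_i\le B$, $b_i\in[T]$. Values are revealed only by evaluation; obtaining $A(\mathbf{x},b)$ requires evaluating $A(\mathbf{x},1),\dots,A(\mathbf{x},b)$ sequentially, costing $b$ units of budget. Instances satisfy Assumption 1 (monotonicity): $b_1\le b_2\Rightarrow A(\mathbf{x},b_1)\le A(\mathbf{x},b_2)$; and Assumption 2 (smoothness): for all $\mathbf{x}_i,\mathbf{x}_j\in\mathcal{X}$, $\min_{b\in[T]}A(\mathbf{x}_i,b)/A(\mathbf{x}_j,b)\ge1-\epsilon\|\mathbf{x}_i-\mathbf{x}_j\|_2$ (ratio $=1$ if both values are $0$, $=+\infty$ if only the denominator is $0$). The optimal clustering radius for $m$ clusters is $\min_{\mathcal{C}\subseteq\mathcal{X},|\mathcal{C}|=m}\max_{\mathbf{x}\in\mathcal{X}}\min_{\mathbf{c}\in\mathcal{C}}\|\mathbf{x}-\mathbf{c}\|_2$.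 An algorithm (possibly randomized) adaptively evaluates values within total budget $B$ and outputs $\mathbf{x}^{Alg}$; it achieves approximation factor $\alpha$ on an instance if $\mathbb{E}[A(\mathbf{x}^{Alg},T)]\ge\alpha\,\max_{\mathbf{x}\in\mathcal{X}}A(\mathbf{x},T)$. *)

(* Defs.v *)
From HB Require Import structures.
From mathcomp Require Import all_boot all_order all_algebra.
From mathcomp Require Import all_classical all_reals all_analysis.
Set Implicit Arguments. Unset Strict Implicit. Unset Printing Implicit Defensive.
Import Order.TTheory GRing.Theory Num.Theory.
Local Open Scope classical_set_scope.
Local Open Scope ring_scope.

Section UVP.
Variable R : realType.

Definition edist (d : nat) (x y : 'rV[R]_d) : R :=
  Num.sqrt (\sum_(j < d) (x ord0 j - y ord0 j) ^+ 2).

(* The known finite set X is given as an injective family pts : 'I_n -> R^d. *)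

(* [is_radius pts C r]: r = max_{x in X} min_{c in C} ||x - c|| (C nonempty). *)
Definition is_radius (d n : nat) (pts : 'I_n -> 'rV[R]_d) (C : {set 'I_n}) (r : R) :=
  (forall i, exists2 c, c \in C & edist (pts i) (pts c) <= r) /\
  (exists i, forall c, c \in C -> r <= edist (pts i) (pts c)).

Definition is_opt_radius (d n : nat) (pts : 'I_n -> 'rV[R]_d) (m : nat) (r : R) :=
  (exists C : {set 'I_n}, #|C| = m /\ is_radius pts C r) /\
  (forall (C : {set 'I_n}) (r' : R), #|C| = m -> is_radius pts C r' -> r <= r').

(* "a1 / a2 >= c" with the conventions: ratio 1 if both are 0, +oo if only
   the denominator is 0. *)
Definition ratio_ge (a1 a2 c : R) : Prop :=
  if a2 == 0 then (a1 == 0 -> c <= 1) else c <= a1 / a2.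

Definition uvp_valid (d n : nat) (pts : 'I_n -> 'rV[R]_d) (T : nat) (eps : R)
    (A : 'rV[R]_d -> nat -> R) : Prop :=
  (forall x b, (1 <= b <= T)%N -> 0 <= A x b <= 1) /\
  (forall x b1 b2, (1 <= b1)%N -> (b1 <= b2)%N -> (b2 <= T)%N -> A x b1 <= A x b2) /\
  (forall i j, forall b, (1 <= b <= T)%N ->
     ratio_ge (A (pts i) b) (A (pts j) b) (1 - eps * edist (pts i) (pts j))).

(* Observations: (configuration index, budget level b, revealed value A(x,b)). *)
Definition obs (n : nat) := ('I_n * nat * R)%type.

(* A deterministic adaptive algorithm: given the history of revealed values it
   either chooses the configuration to advance by one budget unit, or stops;
   at the end it outputs a configuration. *)
Record det_alg (n : nat) := DetAlg {
  alg_next : seq (obs n) -> option 'I_n ;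
  alg_out  : seq (obs n) -> 'I_n }.

Definition level n (h : seq (obs n)) (i : 'I_n) : nat :=
  count (fun o : obs n => o.1.1 == i) h.

(* Run for at most [fuel] unit steps: advancing configuration i from level b-1
   to level b reveals f i b = A(x_i, b) at cost 1; levels never exceed T. *)
Fixpoint run_hist n (al : det_alg n) (f : 'I_n -> nat -> R) (T fuel : nat)
    (h : seq (obs n)) : seq (obs n) :=
  match fuel with
  | 0 => h
  | fuel'.+1 =>
    match alg_next al h with
    | None => h
    | Some i =>
      let b := (level h i).+1 in
      if (b <= T)%N then run_hist al f T fuel' (rcons h (i, b, f i b)) else h
    end
  end.

Definition alg_output d n (al : det_alg n) (pts : 'I_n -> 'rV[R]_d)
    (A : 'rV[R]_d -> nat -> R) (T B : nat) : 'I_n :=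
  alg_out al (run_hist al (fun i b => A (pts i) b) T B [::]).

(* A randomized algorithm: a family of deterministic algorithms indexed by a
   random seed w drawn from a probability space; it is well defined when the
   event "output = i" is measurable for every instance A and every i. *)
Definition rand_alg_measurable d (d0 : measure_display) (Omega : measurableType d0)
    n (alg : Omega -> det_alg n) (pts : 'I_n -> 'rV[R]_d) (T B : nat) : Prop :=
  forall (A : 'rV[R]_d -> nat -> R) (i : 'I_n),
    measurable [set w | alg_output (alg w) pts A T B = i].

Definition exp_value d (d0 : measure_display) (Omega : measurableType d0)
    (P : probability Omega R) n (alg : Omega -> det_alg n)
    (pts : 'I_n -> 'rV[R]_d) (A : 'rV[R]_d -> nat -> R) (T B : nat) : R :=
  \sum_(i < n) fine (P [set w | alg_output (alg w) pts A T B = i]) * A (pts i) T.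

(* max_{x in X} A(x, T) (values are >= 0, so 0 is a neutral start) *)
Definition opt_value d n (pts : 'I_n -> 'rV[R]_d) (A : 'rV[R]_d -> nat -> R) (T : nat) : R :=
  \big[Num.max/0]_(i < n) A (pts i) T.

End UVP.

(* Main.v *)
From Pilot Require Import Defs.
From HB Require Import structures.
From mathcomp Require Import all_boot all_order all_algebra.
From mathcomp Require Import all_classical all_reals all_analysis.
From mathcomp Require Import measurable_realfun.
From mathcomp Require Import lra ring.
Import Order.TTheory GRing.Theory Num.Theory.
Local Open Scope classical_set_scope.
Local Open Scope ring_scope.
From mathcomp Require Import zify.
Section Runs.
Variables (R : realType) (n : nat) (al : det_alg R n) (T : nat).
Implicit Types (f g : 'I_n -> nat -> R) (h : seq (obs R n)).

Lemma run_prefix f fuel h o : o \in h -> o \in run_hist al f T fuel h.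
Proof.
elim: fuel h => [|fuel IH] h oh //=.
case: (alg_next al h) => [i|] //.
case: ifP => // _; apply: IH; by rewrite mem_rcons inE oh orbT.
Qed.

Lemma run_couple f g fuel h :
  (forall o, o \in run_hist al f T fuel h -> f o.1.1 o.1.2 = g o.1.1 o.1.2) ->
  run_hist al g T fuel h = run_hist al f T fuel h.
Proof.
elim: fuel h => [|fuel IH] h //=.
case: (alg_next al h) => [i|] //.
case: ifP => // _ H.
have -> : g i (level h i).+1 = f i (level h i).+1.
  by symmetry; apply: (H (i, (level h i).+1, f i (level h i).+1)); apply: run_prefix; rewrite mem_rcons inE eqxx.
exact: IH.
Qed.

Definition inv h := forall o, o \in h -> (o.1.2 <= level h o.1.1)%N.

Lemma level_rcons h o i : level (rcons h o) i = (level h i + (o.1.1 == i))%N.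
Proof. by rewrite /level -cats1 count_cat /= addn0. Qed.

Lemma run_inv f fuel h : inv h ->
  inv (run_hist al f T fuel h) /\ (size (run_hist al f T fuel h) <= size h + fuel)%N.
Proof.
elim: fuel h => [|fuel IH] h Hh /=; first by rewrite addn0.
case: (alg_next al h) => [i|]; last by split => //; rewrite leq_addr.
case: ifP => _; last by split => //; rewrite leq_addr.
have Hh' : inv (rcons h (i, (level h i).+1, f i (level h i).+1)).
  move=> o; rewrite mem_rcons inE => /orP [/eqP -> | oh] /=.
    by rewrite level_rcons eqxx addn1.
  by rewrite level_rcons (leq_trans (Hh o oh)) // leq_addr.
have [H1 H2] := IH _ Hh'; split => //.
by rewrite (leq_trans H2) // size_rcons addSnnS.
Qed.

Lemma sum_level h : (\sum_(i < n) level h i)%N = size h.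
Proof.
elim: h => [|o h IH]; first by rewrite big1.
rewrite /level /= big_split /= -/(level h) IH (bigD1 o.1.1) //= eqxx big1 ?addn0 //.
by move=> j /negbTE; rewrite eq_sym => ->.
Qed.

Definition touched h := [set i : 'I_n | has (fun o : obs R n => (o.1.1 == i) && (T <= o.1.2)%N) h].

Lemma touched_card f B : (0 < T)%N ->
  (#|touched (run_hist al f T B [::])| <= B %/ T)%N.
Proof.
move=> T0; set H := run_hist al f T B [::].
have [Hi Hs] := @run_inv f B [::] (fun o (oi : o \in [::]) => ltac:(by rewrite in_nil in oi)).
rewrite leq_divRL //.
apply: (leq_trans _ Hs); rewrite -/H -sum_level.
rewrite -sum_nat_const (big_mkcond (fun i => i \in touched H)) /=.
apply: leq_sum => i _; case: ifP => // Hin; move: Hin; rewrite inE; case/hasP => o oH /andP [/eqP oi HT].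
by rewrite (leq_trans HT) // -oi Hi.
Qed.
End Runs.
Section Meas.
Variables (R : realType) (d0 : measure_display) (Omega : measurableType d0)
  (P : probability Omega R) (n : nat).

Lemma phi_sum (O : Omega -> 'I_n) (v : 'I_n -> R) :
  (fun w => (v (O w))%:E) =
  (fun w => (\sum_(i < n) ((v i)%:E * (\1_[set w | O w = i] w)%:E))%E).
Proof.
apply/funext => w; rewrite (bigD1 (O w)) //= big1 ?adde0.
  by rewrite indicE mem_set // mule1.
by move=> i /negbTE Hi; rewrite indicE memNset ?mule0 //= => E; rewrite E eqxx in Hi.
Qed.

Lemma exp_int (O : Omega -> 'I_n) (v : 'I_n -> R) :
  (forall i, measurable [set w | O w = i]) -> (forall i, 0 <= v i) ->
  (\sum_(i < n) fine (P [set w | O w = i]) * v i)%:E = (\int[P]_w (v (O w))%:E)%E.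
Proof.
move=> mO v0; rewrite phi_sum ge0_integral_sum //; last first.
- by move=> i w _; rewrite mule_ge0 // lee_fin.
- move=> i; apply: measurable_funeM; apply/measurable_EFinP.
  exact: measurable_indic.
rewrite -sumEFin; apply: eq_bigr => i _.
rewrite ge0_integralZl_EFin //; last by apply/measurable_EFinP; exact: measurable_indic.
rewrite integral_indic // setIT EFinM fineK; first by rewrite muleC.
exact: fin_num_measure.
Qed.

Lemma meas_phi (O : Omega -> 'I_n) (v : 'I_n -> R) :
  (forall i, measurable [set w | O w = i]) ->
  measurable_fun setT (fun w => (v (O w))%:E).
Proof.
move=> mO; rewrite phi_sum; apply: emeasurable_sum => i.
apply: measurable_funeM; apply/measurable_EFinP; exact: measurable_indic.
Qed.

Lemma yao (J : finType) (V : J -> 'I_n -> R) (Os : J -> Omega -> 'I_n) (K : R) :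
  (forall j i, measurable [set w | Os j w = i]) -> (forall j i, 0 <= V j i) ->
  (forall w, \sum_j V j (Os j w) <= K) ->
  \sum_j \sum_(i < n) fine (P [set w | Os j w = i]) * V j i <= K.
Proof.
move=> mO V0 HK; rewrite -lee_fin -sumEFin.
under eq_bigr => j _ do rewrite exp_int //.
rewrite -ge0_integral_sum //; last first.
- by move=> j w _; rewrite lee_fin.
- by move=> j; apply: meas_phi.
apply: (@le_trans _ _ (\int[P]_w (cst K%:E) w)%E).
  apply: ge0_le_integral => //.
  - by move=> w _; apply: sume_ge0 => j _; rewrite lee_fin.
  - by apply: emeasurable_sum => j; apply: meas_phi.
  - by move=> w _; rewrite sumEFin lee_fin.
rewrite integral_cst //; rewrite [X in (_ * X <= _)%E](_ : _ = 1%E); last exact: probability_setT.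
by rewrite mule1.
Qed.
End Meas.

Definition pos {R : realType} (L r : R) (a : nat) : R := (a.-1)%:R * L + (a != 0)%N%:R * r.

Lemma pdist_L (R : realType) (L r : R) a b : 0 <= r -> 0 <= L ->
  (a.-1 != b.-1)%N -> L <= `|pos L r a - pos L r b|.
Proof.
move=> r0 L0.
wlog lt_ab : a b / (a.-1 < b.-1)%N.
  move=> W; rewrite neq_ltn => /orP [H|H]; first by apply: W => //; rewrite ltn_eqF.
  by rewrite distrC; apply: W => //; rewrite ltn_eqF.
move=> _.
have b0 : (b != 0)%N by case: b lt_ab.
have h1 : (a.-1)%:R + 1 <= (b.-1)%:R :> R by rewrite natr1 ler_nat.
have e0 : 0 <= (a != 0)%N%:R :> R by case: (a != 0)%N => /=; rewrite ?lexx ?ler01.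
have e1 : (a != 0)%N%:R <= 1 :> R by case: (a != 0)%N => /=; rewrite ?lexx ?ler01.
rewrite distrC /pos b0 /= ger0_norm.
  nra.
nra.
Qed.

Lemma pdist_r (R : realType) (L r : R) a b : 0 <= r -> r <= L ->
  (a != b)%N -> r <= `|pos L r a - pos L r b|.
Proof.
move=> r0 rL ab; have [H|H] := eqVneq a.-1 b.-1; last first.
  by apply: (le_trans rL); apply: pdist_L => //; apply: le_trans rL.
case: a b ab H => [|[|a]] [|[|b]] //= ab H; rewrite /pos /=.
- by rewrite !(mul0r, mul1r, add0r, addr0, sub0r, subr0) normrN ger0_norm.
- by rewrite !(mul0r, mul1r, add0r, addr0, sub0r, subr0) ger0_norm.
- by case: H ab => ->; rewrite eqxx.
Qed.

Lemma ratio_ok (R : realType) (a1 a2 c : R) : 0 <= a1 -> 0 <= a2 -> c <= 1 ->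
  (a1 = a2 \/ c <= 0) -> ratio_ge a1 a2 c.
Proof.
move=> h1 h2 c1 [<-|c0]; rewrite /ratio_ge; case: ifP => //.
  by move=> /negbT a0; rewrite divff.
by move=> _; apply: (le_trans c0); apply: divr_ge0.
Qed.

Definition mkA {R : realType} {d n} (pts : 'I_n -> 'rV[R]_d) (T : nat) (u : 'I_n -> R)
  : 'rV[R]_d -> nat -> R :=
  fun x b => if (T <= b)%N then (if [pick j | pts j == x] is Some j then u j else 0) else 0.

Lemma mkA_pts (R : realType) d n (pts : 'I_n -> 'rV[R]_d) T u i b : injective pts ->
  mkA pts T u (pts i) b = if (T <= b)%N then u i else 0.
Proof.
move=> inj; rewrite /mkA; case: ifP => // _.
case: pickP => [j /eqP /inj -> //|/(_ i)]; by rewrite eqxx.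
Qed.

Lemma edist_ge0 (R : realType) d (x y : 'rV[R]_d) : 0 <= Pilot.Defs.edist x y.
Proof. exact: sqrtr_ge0. Qed.

Lemma valid_mk (R : realType) d n (pts : 'I_n -> 'rV[R]_d) T (eps : R) u :
  injective pts -> 0 <= eps -> (forall i, 0 <= u i <= 1) ->
  (forall i j, u i = u j \/ 1 - eps * Pilot.Defs.edist (pts i) (pts j) <= 0) ->
  uvp_valid pts T eps (mkA pts T u).
Proof.
move=> inj e0 u01 uij.
have A0 x b : 0 <= mkA pts T u x b.
  rewrite /mkA; case: ifP => // _; case: pickP => // j _; by case/andP: (u01 j).
split; [|split].
- move=> x b _; rewrite A0 /=; rewrite /mkA; case: ifP => // _.
  by case: pickP => // j _; case/andP: (u01 j).
- move=> x b1 b2 _ b12 _; rewrite {1}/mkA; case: ifP => Tb1; last exact: A0.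
  by rewrite /mkA (leq_trans Tb1 b12).
- move=> i j b _; apply: ratio_ok => //.
  + by rewrite lerBlDr lerDl mulr_ge0 // edist_ge0.
  + rewrite !mkA_pts //; case: ifP => _; last by left.
    exact: uij.
Qed.

Lemma opt_ge (R : realType) d n (pts : 'I_n -> 'rV[R]_d) T u j : injective pts ->
  u j <= opt_value pts (mkA pts T u) T.
Proof.
move=> inj; rewrite /opt_value (bigD1 j) //= mkA_pts // leqnn.
by rewrite le_max lexx.
Qed.

Lemma exp_mk (R : realType) d (d0 : measure_display) (Omega : measurableType d0)
  (P : probability Omega R) n (alg : Omega -> det_alg R n) (pts : 'I_n -> 'rV[R]_d) T B u :
  injective pts ->
  exp_value P alg pts (mkA pts T u) T B =
  \sum_(i < n) fine (P [set w | alg_output (alg w) pts (mkA pts T u) T B = i]) * u i.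
Proof.
by move=> inj; rewrite /exp_value; apply: eq_bigr => i _; rewrite mkA_pts // leqnn.
Qed.

Lemma pair_sum (R : ringType) k (G : 'I_k * bool -> R) :
  \sum_j G j = \sum_(g < k) (G (g, true) + G (g, false)).
Proof.
transitivity (\sum_(g < k) \sum_b G (g, b)); last first.
  by apply: eq_bigr => g _; rewrite big_bool.
rewrite pair_big /=. by apply: eq_bigr => -[].
Qed.

Lemma sum_ind (R : realType) k (E : {set 'I_k}) :
  \sum_(g < k) (g \in E)%:R = #|E|%:R :> R.
Proof.
rewrite [RHS](_ : _ = \sum_(g in E) (1:R)); last by rewrite sumr_const.
by rewrite [RHS]big_mkcond /=; apply: eq_bigr => g _; case: (g \in E).
Qed.

Local Close Scope classical_set_scope.

Theorem corollary1 (R : realType) (eps : R) (T B : nat) :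
  0 < eps -> (0 < T)%N -> (T <= B)%N ->
  let k := (2 * (B %/ T))%N in
  exists (d n : nat) (pts : 'I_n -> 'rV[R]_d), injective pts /\
  exists r : R, 0 < r /\ is_opt_radius pts k r /\
  forall (d0 : measure_display) (Omega : measurableType d0)
         (P : probability Omega R) (alg : Omega -> det_alg R n),
    rand_alg_measurable alg pts T B ->
    forall alpha : R, 1 - eps * r < alpha ->
      exists A : 'rV[R]_d -> nat -> R,
        uvp_valid pts T eps A /\
        exp_value P alg pts A T B < alpha * opt_value pts A T.
Proof.
Local Open Scope classical_set_scope.
move=> e0 T0 TB.
have m0 : (0 < (B %/ T)%N)%N by rewrite divn_gt0.
set m := (B %/ T)%N in m0 *.
move=> k.
have k2 : (2 <= k)%N by rewrite /k; lia.
have k0 : (0 < k)%N by lia.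
set L := eps^-1; set r := eps^-1 / 8.
have L0 : 0 < L by rewrite /L invr_gt0.
have r0 : 0 < r by rewrite /r divr_gt0.
have rL : r <= L by move: L0; rewrite /r /L; lra.
pose pts : 'I_k.+1 -> 'rV[R]_1 := fun i => const_mx (pos L r i).
have ed i j : Pilot.Defs.edist (pts i) (pts j) = `|pos L r i - pos L r j|.
  by rewrite /Pilot.Defs.edist big_ord1 !mxE sqrtr_sqr.
have dr i j : i != j -> r <= Pilot.Defs.edist (pts i) (pts j).
  by move=> ij; rewrite ed; apply: pdist_r => //; apply: ltW.
have inj : injective pts.
  move=> i j eq; apply/eqP; apply/negPn/negP => /dr; rewrite eq ed subrr normr0.
  by rewrite leNgt r0.
pose g0 : 'I_k := Ordinal k0.
pose grp : 'I_k.+1 -> 'I_k := fun i => insubd g0 (i : nat).-1.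
have vgrp i : val (grp i) = (i : nat).-1.
  by rewrite val_insubd; have := ltn_ord i; case: ifP => //; lia.
have dL i j : grp i != grp j -> L <= Pilot.Defs.edist (pts i) (pts j).
  move=> gij; rewrite ed; apply: pdist_L; [exact: ltW| exact: ltW|].
  by rewrite -!vgrp; apply: contra gij => /eqP /val_inj ->.
exists 1%N, k.+1, pts; split => //.
exists r; split => //; split.
  have n1 : (1 < k.+1)%N by lia.
  pose i1 : 'I_k.+1 := inord 1.
  have vi1 : (i1 : nat) = 1%N by rewrite inordK.
  split.
    exists (finset.setC (finset.set1 i1)); split; first by rewrite cardsC1 card_ord.
    split.
      move=> i; case: (eqVneq i i1) => [->|ne].
        exists ord0; first by rewrite !inE; apply/eqP => /(congr1 (@nat_of_ord _)); rewrite vi1.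
        rewrite ed (_ : pos L r i1 - pos L r ord0 = r); first by rewrite ger0_norm // ltW.
        by rewrite /pos vi1 /=; ring.
      exists i; first by rewrite !inE.
      by rewrite ed subrr normr0 ltW.
    exists i1 => c; rewrite !inE => ne; apply: dr; by rewrite eq_sym.
  move=> C r' cC [H1 _].
  case: (pickP (fun i => i \notin C)) => [i iC|H]; last first.
    have CT : C = [set: 'I_k.+1]%SET by apply/setP => i; rewrite inE; move: (H i) => /negbFE.
    by move: cC; rewrite CT cardsT card_ord; lia.
  have [c cC' dc] := H1 i.
  apply: le_trans dc; apply: dr; apply/eqP => ic; by rewrite ic cC' in iC.
move=> d0 Omega P alg malg alpha halpha.
have ha : 7 / 8 < alpha.
  move: halpha; rewrite /r mulrA divff ?gt_eqF //; lra.
pose v1 (g : 'I_k) : 'I_k.+1 -> R := fun i => if grp i == g then 1 else 1/2.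
pose v0 (g : 'I_k) : 'I_k.+1 -> R := fun i => if grp i == g then 0 else 1/2.
pose O u w := alg_output (alg w) pts (mkA pts T u) T B.
pose E u := \sum_(i < k.+1) fine (P [set w | O u w = i]) * u i.
have valid u : (forall i, 0 <= u i <= 1) -> (forall i j, grp i = grp j -> u i = u j) ->
    uvp_valid pts T eps (mkA pts T u).
  move=> u01 ug; apply: valid_mk => //; first exact: ltW.
  move=> i j; case: (eqVneq (grp i) (grp j)) => [/ug|/dL h]; first by left.
  right; rewrite subr_le0; apply: (le_trans _ (ler_wpM2l (ltW e0) h)).
  by rewrite /L divff ?gt_eqF.
have yaoB : \sum_(g < k) (E (v1 g) + 2 * E (v0 g)) <= 7 * m%:R / 2.
  pose V (j : 'I_k * bool) i := if j.2 then v1 j.1 i else 2 * v0 j.1 i.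
  pose Os (j : 'I_k * bool) := O (if j.2 then v1 j.1 else v0 j.1).
  have := @yao R d0 Omega P k.+1 _ V Os (7 * m%:R / 2).
  rewrite pair_sum /=.
  have -> : \sum_(g < k) (\sum_(i < k.+1) fine (P [set w | Os (g, true) w = i]) * V (g, true) i +
      \sum_(i < k.+1) fine (P [set w | Os (g, false) w = i]) * V (g, false) i) =
      \sum_(g < k) (E (v1 g) + 2 * E (v0 g)).
    apply: eq_bigr => g _; congr (_ + _); rewrite /E mulr_sumr; apply: eq_bigr => i _.
    by rewrite /V /=; rewrite mulrCA.
  apply.
  - by move=> j i; apply: malg.
  - move=> [g b] i; rewrite /V /v1 /v0 /=; case: b; case: ifP => _; lra.
  move=> w; rewrite pair_sum /V /Os /=.
  set D := alg w.
  set HZ := run_hist D (fun i b => mkA pts T (fun=> 1/2) (pts i) b) T B [::].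
  set S := @touched R k.+1 T HZ.
  set Ev := grp @: S.
  have cS : (#|S| <= m)%N by apply: touched_card.
  have cE : (#|Ev| <= m)%N by apply: leq_trans cS; apply: leq_imset_card.
  have same g u : g \notin Ev -> (forall i, grp i != g -> u i = 1/2) -> O u w = alg_out D HZ.
    move=> gE hu; rewrite /O /alg_output -/D.
    rewrite (@run_couple R k.+1 D T (fun i b => mkA pts T (fun=> 1/2) (pts i) b)) //.
    move=> o oH; rewrite !mkA_pts //; case: ifP => // Tb.
    rewrite hu //; apply/negP => /eqP gi; move/negP: gE; apply; apply/imsetP.
    exists o.1.1 => //; rewrite inE; apply/hasP; exists o => //; by rewrite eqxx Tb.
  have tb g : v1 g (O (v1 g) w) + 2 * v0 g (O (v0 g) w) <= 3/2 + (if g \in Ev then 1/2 else 0).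
    case: (boolP (g \in Ev)) => gE.
      by rewrite /v1 /v0; case: ifP => _; case: ifP => _; lra.
    rewrite (same g (v1 g) gE); last by move=> i /negbTE h; rewrite /v1 h.
    rewrite (same g (v0 g) gE); last by move=> i /negbTE h; rewrite /v0 h.
    by rewrite /v1 /v0; case: ifP => _; lra.
  apply: (le_trans (ler_sum _ (fun g _ => tb g))).
  rewrite big_split /= sumr_const card_ord -big_mkcond /= sumr_const.
  have : (#|Ev|%:R <= m%:R :> R) by rewrite ler_nat.
  rewrite -(mulr_natr (3/2)) -(mulr_natr (1/2)).
  have -> : k%:R = 2 * m%:R :> R by rewrite /k natrM.
  lra.
have alpha0 : 0 < alpha by lra.
have [g Hg] : exists g, (E (v1 g) < alpha) || (E (v0 g) < alpha / 2).
  case: (boolP [exists g, (E (v1 g) < alpha) || (E (v0 g) < alpha / 2)]).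
    by move/existsP.
  rewrite negb_exists => /forallP H; exfalso.
  have : \sum_(g < k) (alpha + alpha) <= \sum_(g < k) (E (v1 g) + 2 * E (v0 g)).
    apply: ler_sum => g _; move: (H g); rewrite negb_or -!leNgt => /andP [h1 h2].
    lra.
  rewrite sumr_const card_ord -(mulr_natr (alpha + alpha)).
  have -> : k%:R = 2 * m%:R :> R by rewrite /k natrM.
  have : 1 <= m%:R :> R by rewrite ler1n.
  move: yaoB; nra.
case/orP: Hg => Hg.
  exists (mkA pts T (v1 g)); split.
    apply: valid => [i|i j h]; last by rewrite /v1 h.
    rewrite /v1; case: ifP => _; lra.
  rewrite exp_mk //; apply: (lt_le_trans Hg).
  have := @opt_ge R 1 k.+1 pts T (v1 g) (lift ord0 g) inj.
  have gl : grp (lift ord0 g) = g by apply: val_inj; rewrite vgrp lift0.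
  have -> : v1 g (lift ord0 g) = 1 by rewrite /v1 gl eqxx.
  move=> h; rewrite -{1}(mulr1 alpha) ler_wpM2l // ltW //.
exists (mkA pts T (v0 g)); split.
  apply: valid => [i|i j h]; last by rewrite /v0 h.
  rewrite /v0; case: ifP => _; lra.
rewrite exp_mk //; apply: (lt_le_trans Hg).
pose j : 'I_k.+1 := if val g == 0%N then inord 2 else inord 1.
have gj : grp j != g.
  apply/eqP => /(congr1 val); rewrite vgrp /j; case: ifP => /eqP g0'.
    by rewrite inordK ?g0' //; lia.
  by rewrite inordK // => /= h; apply: g0'; exact: (esym h).
have := @opt_ge R 1 k.+1 pts T (v0 g) j inj.
rewrite /v0 (negbTE gj) => h.
by rewrite ler_pM2l // ?ler_pdivrMr //; lra.
Qed.
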